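(* Let $d\ge0$, and consider the Gaussian broadcast model on $P=\mathbb Z_{\ge0}^{d+1}$ in the critical case $\alpha_i=1/i$ for all $i\in[d+1]$. Fix $t\ge0$ and reals $c_u\ge0$ ($u\in L_t$) with $\sum_{u\in L_t}c_u=1$, and let $\zeta=\sum_{u\in L_t}c_uX_u$. Let $\Gamma$ be the random chain that starts at $u\in L_t$ with probability $c_u$ and, at each step, moves from its current vertex $x\ne\mathbf 0$ to an element of $\mathfrak p(x)$ chosen uniformly at random (independently of previous steps), stopping when it reaches $\mathbf 0$. For $w\in P$ write $\mathbb P(w\in\Gamma)$ for the probability that $\Gamma$ visits $w$. Then $$\operatorname{Var}(\zeta)\ge\frac1{d+1}\sum_{w\in P}\mathbb P(w\in\Gamma)^2.$$
   Context: Gaussian broadcast model on the finite model: $P=\mathbb{Z}_{\ge0}^{d+1}$ with $u\le v$ iff $v-u\in\mathbb{Z}_{\ge0}^{d+1}$; $L_t$ = tuples with coordinate sum $t$; $\mathfrak p(v)$ = set of elements covered by $v$ (the vectors $v-e_i$ with $v_i>0$), so $|\mathfrak p(v)|$ is the number of positive coordinates; $\mathbf 0$ is the minimal element. Let $X_0\sim\mathcal N(0,1)$, independently i.i.d. $W_{u\to v}\sim\mathcal N(0,1)$ for covering pairs $u\lessdot v$, $X_{\mathbf 0}=X_0$, and $X_v=\alpha_{|\mathfrak p(v)|}\sum_{u\in\mathfrak p(v)}(X_u+W_{u\to v})$ for $v\ne\mathbf 0$. *)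

(* Defs.v *)
From mathcomp Require Import all_boot all_order all_algebra.
Set Implicit Arguments. Unset Strict Implicit. Unset Printing Implicit Defensive.
Import Order.TTheory GRing.Theory Num.Theory.
Local Open Scope ring_scope.

Definition vtx (d : nat) := {ffun 'I_d.+1 -> nat}.

Definition lvl d (v : vtx d) : nat := (\sum_i v i)%N.

Definition dec d (v : vtx d) (i : 'I_d.+1) : vtx d :=
  [ffun j => if j == i then (v j).-1 else v j].

Definition parents d (v : vtx d) : seq (vtx d) :=
  [seq dec v i | i <- enum 'I_d.+1 & (0 < v i)%N].

(* L_s, enumerated as a (duplicate-free) list: the vectors with coordinate sum s
   (all coordinates are then <= s). *)
Definition levelset d (s : nat) : seq (vtx d) :=
  [seq [ffun i => nat_of_ord (f i)] : vtx d | f : {ffun 'I_d.+1 -> 'I_s.+1} <-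
     enum [set: {ffun 'I_d.+1 -> 'I_s.+1}] & (\sum_i nat_of_ord (f i) == s)%N].

(* ---------- The Gaussian model ----------
   The independent standard Gaussian sources are X_0 (index None) and
   W_{u->v} (index Some (u,v)) for covering pairs u <. v.  Every X_v is a
   (finite) linear combination of the sources; we represent a centred Gaussian
   variable of this linear span by its coefficient function src d -> R. *)
Definition src d := option (vtx d * vtx d).

(* coefficients of X_v, by recursion on the level n = lvl v:
   X_0 = X_0, X_v = alpha_{|p(v)|} * sum_{u in p(v)} (X_u + W_{u->v}),
   with alpha_i = 1/i (critical case). *)
Fixpoint xcoef (R : unitRingType) d (n : nat) (v : vtx d) (s : src d) : R :=
  match n with
  | 0 => (s == None)%:R
  | n'.+1 => ((size (parents v))%:R)^-1 *
             \sum_(u <- parents v) (xcoef R n' u s + (s == Some (u, v))%:R)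
  end.


Definition X {R : unitRingType} d (v : vtx d) : src d -> R := @xcoef R d (lvl v) v.

(* Variance of a linear combination f of the independent N(0,1) sources whose
   support lies among X_0 and the W_{u->v} with lvl v <= t:
   Var = sum of the squared coefficients. *)
Definition gvar {R : ringType} (d : nat) (t : nat) (f : src d -> R) : R :=
  f None ^+ 2 +
  \sum_(1 <= s < t.+1) \sum_(v <- levelset d s) \sum_(u <- parents v)
     f (Some (u, v)) ^+ 2.

(* ---------- The random chain Gamma ----------
   dpaths n x = all possible trajectories x = x_0, x_1, ..., x_n = 0 of the
   chain started at x (lvl x = n), each step x_{k+1} in p(x_k). *)
Fixpoint dpaths d (n : nat) (x : vtx d) : seq (seq (vtx d)) :=
  match n with
  | 0 => [:: [:: x]]
  | n'.+1 => flatten [seq [seq x :: p | p <- dpaths n' y] | y <- parents x]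
  end.

Fixpoint pathprob {R : unitRingType} d (p : seq (vtx d)) : R :=
  match p with
  | x :: ((_ :: _) as q) => ((size (parents x))%:R)^-1 * pathprob q
  | _ => 1
  end.

Definition visitprob {R : unitRingType} d (t : nat) (c : vtx d -> R) (w : vtx d) : R :=
  \sum_(u <- levelset d t) c u *
    \sum_(p <- @dpaths d t u) pathprob p * (w \in p)%:R.

(* Main.v *)
Require Import Defs.
From mathcomp Require Import all_boot all_order all_algebra.
From mathcomp Require Import zify ring lra.
Import Order.TTheory GRing.Theory Num.Theory.
Set Implicit Arguments. Unset Strict Implicit. Unset Printing Implicit Defensive.
Local Open Scope ring_scope.
Section Aux.
Variable d : nat.

Lemma lvl_dec (v : vtx d) i : (0 < v i)%N -> lvl (dec v i) = (lvl v).-1.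
Proof.
move=> hi; rewrite /lvl (bigD1 i) // [in RHS](bigD1 i) //= ffunE eqxx.
rewrite (eq_bigr (fun j => v j)); last by move=> j /negbTE hj; rewrite ffunE hj.
by case: (v i) hi => // m _; rewrite addSn.
Qed.

Lemma lvl_ge (v : vtx d) i : (v i <= lvl v)%N.
Proof. by rewrite /lvl (bigD1 i) //= leq_addr. Qed.

Lemma mem_parents (v y : vtx d) :
  y \in parents v -> exists2 i, (0 < v i)%N & y = dec v i.
Proof. by case/mapP=> i; rewrite mem_filter => /andP[hi _] ->; exists i. Qed.

Lemma lvl_parents (v y : vtx d) : y \in parents v -> lvl y = (lvl v).-1.
Proof. by case/mem_parents=> i hi ->; rewrite lvl_dec. Qed.

Lemma lvl_parents_gt0 (v y : vtx d) : y \in parents v -> (0 < lvl v)%N.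
Proof. by case/mem_parents=> i hi _; apply: leq_trans hi (lvl_ge v i). Qed.

Lemma size_parents_gt0 (v : vtx d) : (0 < lvl v)%N -> (0 < size (parents v))%N.
Proof.
move=> hv; rewrite size_map size_filter -has_count.
case: (pickP (fun i => 0 < v i)%N) => [i hi | h0].
  by apply/hasP; exists i; rewrite ?mem_enum.
move: hv; rewrite /lvl big1 // => i _; move: (h0 i) => /= /negbT; lia.
Qed.

Lemma size_parents_le (v : vtx d) : (size (parents v) <= d.+1)%N.
Proof.
rewrite size_map size_filter (leq_trans (count_size _ _)) //.
by rewrite size_enum_ord.
Qed.

Lemma uniq_parents (v : vtx d) : uniq (parents v).
Proof.
rewrite map_inj_in_uniq; first by apply: filter_uniq; apply: enum_uniq.
move=> i j.
rewrite !mem_filter => /andP[hi _] /andP[hj _] /ffunP /(_ i).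
rewrite !ffunE eqxx; case: eqP => [->//|_]; lia.
Qed.

Lemma lvl_levelset s (v : vtx d) : v \in levelset d s -> lvl v = s.
Proof.
case/mapP=> f; rewrite mem_filter => /andP[/eqP hs _] ->.
by rewrite /lvl; under eq_bigr do rewrite ffunE.
Qed.

Lemma size_levelset0 : (size (levelset d 0) <= 1)%N.
Proof.
rewrite size_map size_filter (leq_trans (count_size _ _)) //.
by rewrite -cardE cardsT card_ffun card_ord exp1n.
Qed.

Lemma dpaths_head n (y : vtx d) p : p \in dpaths n y -> exists q, p = y :: q.
Proof.
case: n => [|n] /=; first by rewrite mem_seq1 => /eqP ->; exists [::].
by case/flatten_mapP=> z _ /mapP[q _ ->]; exists q.
Qed.

Lemma lvl_in_path n (x : vtx d) p w :
  lvl x = n -> p \in dpaths n x -> w \in p -> (lvl w <= n)%N.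
Proof.
elim: n x p => [|n IH] x p hx /=.
  by rewrite mem_seq1 => /eqP -> ; rewrite mem_seq1 => /eqP ->; rewrite hx.
case/flatten_mapP=> y hy /mapP[q hq ->]; rewrite in_cons => /orP[/eqP->|hw].
  by rewrite hx.
have hly : lvl y = n by rewrite (lvl_parents hy) hx.
by apply: leqW; apply: IH hq hw.
Qed.

Lemma lvl0_eq (v w : vtx d) : lvl v = 0%N -> lvl w = 0%N -> v = w.
Proof.
move=> /eqP hv /eqP hw; move: hv hw; rewrite /lvl !sum_nat_eq0.
move=> /forallP hv /forallP hw; apply/ffunP => i.
by move: (hv i) (hw i) => /= /eqP -> /eqP ->.
Qed.

Lemma zero_in_path n (x : vtx d) p w :
  lvl x = n -> p \in dpaths n x -> lvl w = 0%N -> w \in p.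
Proof.
elim: n x p => [|n IH] x p hx /=.
  by rewrite mem_seq1 => /eqP -> hw; rewrite (lvl0_eq hw hx) mem_seq1.
case/flatten_mapP=> y hy /mapP[q hq ->] hw; rewrite in_cons; apply/orP; right.
have hly : lvl y = n by rewrite (lvl_parents hy) hx.
exact: IH hq hw.
Qed.

End Aux.
Section Alg.
Variables (R : realFieldType) (d : nat).
Local Notation k x := ((size (parents x))%:R : R).

Lemma sum_const_seq (T : Type) (r : seq T) (a : R) : \sum_(u <- r) a = a *+ size r.
Proof. by elim: r => [|x r IH]; rewrite ?big_nil ?big_cons ?IH ?mulrS. Qed.

Lemma sum_eq_uniq (T : eqType) (r : seq T) u :
  uniq r -> u \in r -> \sum_(y <- r) ((y == u)%:R : R) = 1.
Proof.
elim: r => [|a r IH] //= /andP[har ur]; rewrite big_cons in_cons.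
case: eqP => [->|hne] /= hu.
  rewrite eqxx big1_seq ?addr0 // => y /andP[_ hy].
  by case: eqP hy har => // -> ->.
by case: eqP => [hh|_]; [case: hne | rewrite add0r IH].
Qed.

Lemma k_neq0 (x : vtx d) : (0 < lvl x)%N -> k x != 0.
Proof. by move=> h; rewrite pnatr_eq0 -lt0n size_parents_gt0. Qed.

Lemma invk (x : vtx d) : (0 < lvl x)%N -> (k x)^-1 *+ size (parents x) = 1.
Proof. by move=> h; rewrite -(mulr_natr (k x)^-1) mulVf // k_neq0. Qed.

Lemma sum_dpaths_S (n : nat) (x : vtx d) (F : seq (vtx d) -> R) :
  \sum_(p <- dpaths n.+1 x) F p = \sum_(y <- parents x) \sum_(p <- dpaths n y) F (x :: p).
Proof. by rewrite /= big_flatten big_map; apply: eq_bigr => y _; rewrite big_map. Qed.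

Lemma pathprob_cons n (x y : vtx d) p : p \in dpaths n y ->
  pathprob (R:=R) (x :: p) = (k x)^-1 * pathprob p.
Proof. by case/dpaths_head=> q ->. Qed.

Lemma sum_pathprob n (x : vtx d) : lvl x = n ->
  \sum_(p <- dpaths n x) pathprob (R:=R) p = 1.
Proof.
elim: n x => [|n IH] x hx; first by rewrite /= big_seq1.
rewrite sum_dpaths_S.
rewrite (eq_big_seq (fun _ => (k x)^-1)); last first.
  move=> y hy; rewrite big_seq (eq_bigr (fun p => (k x)^-1 * pathprob p)); last first.
    by move=> p hp; rewrite (pathprob_cons _ hp).
  by rewrite -big_seq -mulr_sumr IH ?mulr1 // (lvl_parents hy) hx.
by rewrite sum_const_seq invk // hx.
Qed.

Lemma xcoef_None n (x : vtx d) : lvl x = n -> xcoef R n x None = 1.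
Proof.
elim: n x => [|n IH] x hx //=.
rewrite (eq_big_seq (fun _ => 1)); last first.
  by move=> y hy; rewrite IH ?addr0 // (lvl_parents hy) hx.
by rewrite sum_const_seq mulVf // k_neq0 // hx.
Qed.

Definition Q n (x v : vtx d) : R :=
  \sum_(p <- dpaths n x) pathprob p * (v \in p)%:R.

Lemma Q_high n (x v : vtx d) : lvl x = n -> (n < lvl v)%N -> Q n x v = 0.
Proof.
move=> hx hv; rewrite /Q big1_seq // => p /andP[_ hp].
case hvp: (v \in p); last by rewrite mulr0.
by move: (lvl_in_path hx hp hvp); lia.
Qed.

Lemma xcoef_Some n (x u v : vtx d) : lvl x = n -> u \in parents v ->
  xcoef R n x (Some (u, v)) = Q n x v / k v.
Proof.
elim: n x => [|n IH] x hx huv /=.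
  rewrite /Q big_seq1 /= mem_seq1.
  case: eqP => [hvx|]; last by rewrite mul1r mul0r.
  by move: (lvl_parents_gt0 huv); rewrite hvx hx.
rewrite /Q sum_dpaths_S -/(Q n.+1 x v).
case: (eqVneq v x) => [hvx|hvx].
- subst v.
  rewrite (eq_big_seq (fun y => ((y == u)%:R : R))); last first.
    move=> y hy; have hly : lvl y = n by rewrite (lvl_parents hy) hx.
    rewrite IH // Q_high ?hx // mul0r add0r.
    by have -> : (Some (u, x) == Some (y, x)) = (y == u) by apply/eqP/eqP => [[->]|->].
  rewrite (sum_eq_uniq (uniq_parents x) huv) mulr1.
  rewrite (eq_big_seq (fun _ => (k x)^-1)); last first.
    move=> y hy; rewrite big_seq (eq_bigr (fun p => (k x)^-1 * pathprob p)); last first.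
      by move=> p hp; rewrite (pathprob_cons _ hp) in_cons eqxx mulr1.
    by rewrite -big_seq -mulr_sumr sum_pathprob ?mulr1 // (lvl_parents hy) hx.
  by rewrite sum_const_seq invk ?mul1r // hx.
- rewrite (eq_big_seq (fun y => Q n y v / k v)); last first.
    move=> y hy; have hly : lvl y = n by rewrite (lvl_parents hy) hx.
    rewrite IH //.
    by case: eqP => [[_ hh]|]; [move: hvx; rewrite hh eqxx | rewrite addr0].
  have E : \sum_(y <- parents x) \sum_(p <- dpaths n y) pathprob (x :: p) * (v \in x :: p)%:R
      = (k x)^-1 * \sum_(y <- parents x) Q n y v.
    rewrite mulr_sumr; apply: eq_big_seq => y hy.
    rewrite /Q mulr_sumr; apply: eq_big_seq => p hp.
    by rewrite (pathprob_cons _ hp) in_cons (negbTE hvx) /= mulrA.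
  by rewrite E -mulr_suml mulrA.
Qed.

End Alg.
Lemma num_bound (R : realFieldType) (q : R) (k D : nat) :
  (0 < k)%N -> (k <= D)%N -> (D%:R)^-1 * q ^+ 2 <= (q / k%:R) ^+ 2 * k%:R.
Proof.
move=> hk hkD.
have kp : (0 : R) < k%:R by rewrite ltr0n.
have Dp : (0 : R) < D%:R by rewrite ltr0n; apply: leq_trans hkD.
have -> : (q / k%:R) ^+ 2 * k%:R = (k%:R)^-1 * q ^+ 2.
  by field; rewrite gt_eqF.
apply: ler_wpM2r; first exact: sqr_ge0.
by rewrite lef_pV2 ?posrE // ler_nat.
Qed.

Theorem mainTheorem14 (R : realFieldType) (d t : nat) (c : vtx d -> R)
  (c_ge0 : forall u, u \in levelset d t -> 0 <= c u)
  (c_sum : \sum_(u <- levelset d t) c u = 1) :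
  let zeta : src d -> R := fun s => \sum_(u <- levelset d t) c u * X u s in
  gvar t zeta >=
    (d.+1%:R)^-1 * \sum_(0 <= s < t.+1) \sum_(w <- levelset d s) visitprob t c w ^+ 2.
Proof.
cbv zeta. set zeta := (fun s : src d => _).
have zN : zeta None = 1.
  rewrite /zeta -[RHS]c_sum; apply: eq_big_seq => x hx.
  by rewrite /X xcoef_None ?mulr1.
have zS : forall u v, u \in parents v ->
    zeta (Some (u, v)) = visitprob t c v / (size (parents v))%:R.
  move=> u v huv; rewrite /zeta /visitprob mulr_suml; apply: eq_big_seq => x hx.
  rewrite /X xcoef_Some // (lvl_levelset hx) -mulrA; congr (_ * (_ / _)).
have q0 : forall w, w \in levelset d 0 -> visitprob t c w = 1.
  move=> w hw; rewrite /visitprob -[RHS]c_sum; apply: eq_big_seq => x hx.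
  have E : \sum_(p <- dpaths t x) pathprob p * (w \in p)%:R
           = \sum_(p <- dpaths t x) pathprob (R:=R) p.
    apply: eq_big_seq => p hp.
    by rewrite (zero_in_path (lvl_levelset hx) hp (lvl_levelset hw)) mulr1.
  by rewrite E (sum_pathprob R (lvl_levelset hx)) mulr1.
rewrite /gvar zN big_ltn // mulrDr expr1n; apply: lerD.
  rewrite (eq_big_seq (fun _ => 1)); last by move=> w hw; rewrite q0 // expr1n.
  rewrite sum_const_seq ler_pdivrMl ?ltr0n // mulr1 ler_nat.
  by apply: leq_trans (size_levelset0 d) _.
rewrite mulr_sumr big_seq [X in _ <= X]big_seq; apply: ler_sum => s.
rewrite mem_index_iota => /andP[s1 _].
rewrite mulr_sumr big_seq [X in _ <= X]big_seq; apply: ler_sum => v hv.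
have lv := lvl_levelset hv.
rewrite (eq_big_seq (fun _ => (visitprob t c v / (size (parents v))%:R) ^+ 2)); last first.
  by move=> u hu; rewrite zS.
rewrite sum_const_seq -[X in _ <= X]mulr_natr; apply: num_bound.
  by apply: size_parents_gt0; rewrite lv.
exact: size_parents_le.
Qed.
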